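(* Let $n\ge 1$ be an integer, $a_0,\dots,a_n$ real constants, $p\in\{1,2,3,4\}$, and let $A^{j+k}_p,B^{j+k}_p$ ($|k|\le p$), $\mathcal{A}(\Lambda)$, $\mathcal{B}(\Lambda)$ and $C_{p+2}$ be as defined in the context (computed with the optimally blended quadrature rule). Fix a frequency $\omega>0$ and, for a mesh size $h>0$, let $\tilde\lambda^h$ be the approximate eigenvalue associated with the Bloch wave $U^j=e^{ij\omega h}$ in the mixed isogeometric discretization of $\mathcal{L}=\sum_{m=0}^n a_m(-\Delta)^m$, i.e. the number satisfying $$\Big(\sum_{m=1}^n a_m\,\omega^{2m-2}\Big)\mathcal{A}(\omega h)=(\tilde\lambda^h-a_0)\,\mathcal{B}(\omega h)\,h^2 .$$ Then, as $h\to 0$, $$\tilde\lambda^h-\sum_{k=0}^n a_k\,\omega^{2k}=\Big(C_{p+2}\sum_{k=1}^n a_k\,\omega^{2k}\Big)(\omega h)^{2p+2}+\mathcal{O}(h^{2p+4}).$$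
   Context: Setting: the $2n$-order eigenvalue problem $\mathcal{L}u=\lambda u$ with $\mathcal{L}=\sum_{m=0}^n a_m(-\Delta)^m$ is written in mixed form with auxiliary fields $\psi^0=u$, $\psi^m=-\Delta\psi^{m-1}$ ($m=1,\dots,n-1$), and discretized with $C^{p-1}$ B-splines of degree $p$ on a uniform 1D mesh of size $h$; with the Bloch ansatz $\Psi^{m,j}=\omega^{2m}e^{ij\omega h}$ for the coefficients of $\psi^m_h$ and elimination of the auxiliary fields, one obtains the defining relation for $\tilde\lambda^h$ given in the claim. B-splines: on knots $x_j=jh$, $\theta^j_0=1$ on $[x_j,x_{j+1})$ and $0$ otherwise, $\theta^j_p(x)=\frac{x-x_j}{x_{j+p}-x_j}\theta^j_{p-1}(x)+\frac{x_{j+p+1}-x}{x_{j+p+1}-x_{j+1}}\theta^{j+1}_{p-1}(x)$. Discrete forms: $a_h(w,v)=\sum_K\sum_l\varpi_{l,K}w'(n_{l,K})v'(n_{l,K})$, $b_h(w,v)=\sum_K\sum_l\varpi_{l,K}w(n_{l,K})v(n_{l,K})$, using elementwise the optimally blended rule $\tau_pG_{p+1}+(1-\tau_p)L_{p+1}$ ($G_l$: $l$-point Gauss–Legendre, $L_l$: $l$-point Gauss–Lobatto), with $\tau_1=\tfrac12,\tau_2=\tfrac13,\tau_3=-\tfrac32,\tau_4=-\tfrac{79}{5}$. For an interior index $j$: $A^{j+k}_p=h\,a_h(\theta^{j+k}_p,\theta^j_p)$, $B^{j+k}_p=\frac1h b_h(\theta^{j+k}_p,\theta^j_p)$ ($|k|\le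 p$), independent of $h$ and $j$; $\mathcal{A}(\Lambda)=A^j_p+2\sum_{k=1}^pA^{j+k}_p\cos(k\Lambda)$, $\mathcal{B}(\Lambda)=B^j_p+2\sum_{k=1}^pB^{j+k}_p\cos(k\Lambda)$; $C_{p+2}=2(-1)^p\sum_{k=1}^p\big(\frac{k^{2p+4}}{(2p+4)!}A^{j+k}_p+\frac{k^{2p+2}}{(2p+2)!}B^{j+k}_p\big)$. The quantity $\sum_{k=0}^n a_k\omega^{2k}$ is the exact eigenvalue of $\mathcal{L}$ for frequency $\omega$ (e.g. $\omega=j\pi$ on $[0,1]$). *)

(* Defs.v *)
From Stdlib Require Import Reals ZArith List.
Import ListNotations.
Open Scope R_scope.

Fixpoint sumR (f : nat -> R) (N : nat) : R :=
  match N with O => 0 | S N' => sumR f N' + f N' end.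

(* bpiece p j m x : the polynomial piece of theta^j_p on the closed element
   K_m = [m, m+1], evaluated at x (Cox-de Boor recursion, unit knot spacing,
   so x_{j+p} - x_j = p). *)
Fixpoint bpiece (p : nat) (j m : Z) (x : R) : R :=
  match p with
  | O => if Z.eqb j m then 1 else 0
  | S q => (x - IZR j) / INR (S q) * bpiece q j m x
         + (IZR (j + Z.of_nat (S q) + 1) - x) / INR (S q) * bpiece q (j + 1) m x
  end.

Fixpoint dbpiece (p : nat) (j m : Z) (x : R) : R :=
  match p with
  | O => 0
  | S q => / INR (S q) * bpiece q j m x
         + (x - IZR j) / INR (S q) * dbpiece q j m x
         - / INR (S q) * bpiece q (j + 1) m x
         + (IZR (j + Z.of_nat (S q) + 1) - x) / INR (S q) * dbpiece q (j + 1) m x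
  end.

(* lists of (node, weight) *)
Definition gauss (l : nat) : list (R * R) :=
  match l with
  | 1%nat => [(0, 2)]
  | 2%nat => [(- / sqrt 3, 1); (/ sqrt 3, 1)]
  | 3%nat => [(- sqrt (3/5), 5/9); (0, 8/9); (sqrt (3/5), 5/9)]
  | 4%nat =>
      let a := sqrt (3/7 - 2/7 * sqrt (6/5)) in
      let b := sqrt (3/7 + 2/7 * sqrt (6/5)) in
      let wa := (18 + sqrt 30) / 36 in
      let wb := (18 - sqrt 30) / 36 in
      [(- b, wb); (- a, wa); (a, wa); (b, wb)]
  | 5%nat =>
      let a := / 3 * sqrt (5 - 2 * sqrt (10/7)) in
      let b := / 3 * sqrt (5 + 2 * sqrt (10/7)) in
      let wa := (322 + 13 * sqrt 70) / 900 in
      let wb := (322 - 13 * sqrt 70) / 900 in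
      [(- b, wb); (- a, wa); (0, 128/225); (a, wa); (b, wb)]
  | _ => []
  end.

Definition lobatto (l : nat) : list (R * R) :=
  match l with
  | 2%nat => [(-1, 1); (1, 1)]
  | 3%nat => [(-1, 1/3); (0, 4/3); (1, 1/3)]
  | 4%nat => [(-1, 1/6); (- / sqrt 5, 5/6); (/ sqrt 5, 5/6); (1, 1/6)]
  | 5%nat => [(-1, 1/10); (- sqrt (3/7), 49/90); (0, 32/45);
              (sqrt (3/7), 49/90); (1, 1/10)]
  | _ => []
  end.

Definition apply_rule (r : list (R * R)) (m : Z) (f : R -> R) : R :=
  fold_right (fun nw acc => snd nw / 2 * f (IZR m + (1 + fst nw) / 2) + acc) 0 r.

Definition tau (p : nat) : R :=
  match p with
  | 1%nat => 1/2
  | 2%nat => 1/3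
  | 3%nat => - (3/2)
  | 4%nat => - (79/5)
  | _ => 0
  end.

Definition blended (p : nat) (m : Z) (f : R -> R) : R :=
  tau p * apply_rule (gauss (S p)) m f
  + (1 - tau p) * apply_rule (lobatto (S p)) m f.

(* sum over the elements K_m, m = -p .. 2p; these contain the supports of
   theta^0_p and theta^k_p for all |k| <= p, all other elements contribute 0 *)
Definition sum_elems (p : nat) (g : Z -> R) : R :=
  sumR (fun i => g (Z.of_nat i - Z.of_nat p)%Z) (3 * p + 1).

(* A^{j+k}_p and B^{j+k}_p computed with j = 0 and h = 1
   (they are independent of h and of the interior index j) *)
Definition Acoef (p : nat) (k : Z) : R :=
  sum_elems p (fun m => blended p m (fun x => dbpiece p k m x * dbpiece p 0 m x)).

Definition Bcoef (p : nat) (k : Z) : R :=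
  sum_elems p (fun m => blended p m (fun x => bpiece p k m x * bpiece p 0 m x)).

Definition calA (p : nat) (L : R) : R :=
  Acoef p 0 + 2 * sumR (fun i => Acoef p (Z.of_nat (S i)) * cos (INR (S i) * L)) p.

Definition calB (p : nat) (L : R) : R :=
  Bcoef p 0 + 2 * sumR (fun i => Bcoef p (Z.of_nat (S i)) * cos (INR (S i) * L)) p.

Definition Cconst (p : nat) : R :=
  2 * (-1) ^ p *
  sumR (fun i => INR (S i) ^ (2 * p + 4) / INR (fact (2 * p + 4)) * Acoef p (Z.of_nat (S i))
               + INR (S i) ^ (2 * p + 2) / INR (fact (2 * p + 2)) * Bcoef p (Z.of_nat (S i))) p.

(* Main.v *)
Require Import Defs.
From Stdlib Require Import Reals ZArith List QArith Qreals Lra Lia.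
Import ListNotations.
Open Scope R_scope.

Fixpoint qeval (P : list Q) (x : R) : R :=
  match P with [] => 0 | c :: P' => Q2R c + x * qeval P' x end.

Fixpoint padd (P P2 : list Q) : list Q :=
  match P with
  | [] => P2
  | a :: P' => match P2 with [] => P | b :: Q' => Qred (a + b)%Q :: padd P' Q' end
  end.

Definition pscale (c : Q) (P : list Q) : list Q := map (fun x => Qred (c * x)) P.

Lemma Q2R_red x : Q2R (Qred x) = Q2R x.
Proof. apply Qeq_eqR, Qred_correct. Qed.

Fixpoint pmul' (P P2 : list Q) : list Q :=
  match P with [] => [] | a :: P' => padd (pscale a P2) (0%Q :: pmul' P' P2) end.

Definition pmul (P P2 : list Q) : list Q :=
  match P2 with [] => [] | _ => pmul' P P2 end.

Lemma qeval_padd P P2 x : qeval (padd P P2) x = qeval P x + qeval P2 x.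
Proof.
  revert P2; induction P as [|a P IH]; intros [|b P2]; cbn [padd qeval]; try ring.
  rewrite IH, Q2R_red, Q2R_plus; ring.
Qed.

Lemma qeval_pscale c P x : qeval (pscale c P) x = Q2R c * qeval P x.
Proof. induction P as [|a P IH]; cbn [pscale map qeval]; [ring|]. fold (pscale c P). rewrite IH, Q2R_red, Q2R_mult; ring. Qed.

Lemma qeval_pmul' P P2 x : qeval (pmul' P P2) x = qeval P x * qeval P2 x.
Proof.
  induction P as [|a P IH]; simpl; [ring|].
  rewrite qeval_padd, qeval_pscale; simpl. rewrite IH, RMicromega.Q2R_0; ring.
Qed.

Lemma qeval_pmul P P2 x : qeval (pmul P P2) x = qeval P x * qeval P2 x.
Proof. destruct P2; simpl; [ring|]. apply qeval_pmul'. Qed.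

Definition qZ (z : Z) : Q := inject_Z z.

Lemma Q2R_qZ z : Q2R (qZ z) = IZR z.
Proof. unfold qZ, Q2R; simpl; field. Qed.

Definition qd (q : nat) : Q := qZ (Z.of_nat (S q)).

Lemma qd_nz q : ~ (qd q == 0)%Q.
Proof. unfold qd, qZ, Qeq; simpl. lia. Qed.

Lemma Q2R_qd q : Q2R (qd q) = INR (S q).
Proof. unfold qd. rewrite Q2R_qZ, INR_IZR_INZ. reflexivity. Qed.

Lemma Q2R_invqd q : Q2R (/ qd q) = / INR (S q).
Proof. rewrite Q2R_inv by apply qd_nz. now rewrite Q2R_qd. Qed.

Fixpoint qb (p : nat) (j m : Z) : list Q :=
  match p with
  | O => if Z.eqb j m then [1%Q] else []
  | S q => padd (pmul [(- qZ j / qd q)%Q; (/ qd q)%Q] (qb q j m))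
                (pmul [(qZ (j + Z.of_nat (S q) + 1) / qd q)%Q; (- / qd q)%Q] (qb q (j + 1) m))
  end.

Fixpoint qdb (p : nat) (j m : Z) : list Q :=
  match p with
  | O => []
  | S q => padd (padd (padd (pscale (/ qd q) (qb q j m))
                   (pmul [(- qZ j / qd q)%Q; (/ qd q)%Q] (qdb q j m)))
                   (pscale (- / qd q) (qb q (j + 1) m)))
                (pmul [(qZ (j + Z.of_nat (S q) + 1) / qd q)%Q; (- / qd q)%Q] (qdb q (j + 1) m))
  end.

Lemma bpiece_q p j m x : bpiece p j m x = qeval (qb p j m) x.
Proof.
  revert j; induction p as [|q IH]; intro j; cbn [bpiece dbpiece qb qdb].
  - destruct (Z.eqb j m); simpl; [rewrite RMicromega.Q2R_1|]; ring.
  - rewrite qeval_padd, !qeval_pmul, <- !IH. cbn [qeval].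
    unfold Qdiv. rewrite ?Q2R_mult, ?Q2R_opp, ?Q2R_qZ, ?Q2R_invqd, ?Q2R_opp, ?Q2R_invqd, ?RMicromega.Q2R_0.
    unfold Rdiv. ring.
Qed.

Lemma dbpiece_q p j m x : dbpiece p j m x = qeval (qdb p j m) x.
Proof.
  revert j; induction p as [|q IH]; intro j; cbn [bpiece dbpiece qb qdb].
  - reflexivity.
  - rewrite !qeval_padd, !qeval_pmul, !qeval_pscale, <- !IH, <- !bpiece_q. cbn [qeval].
    unfold Qdiv. rewrite ?Q2R_mult, ?Q2R_opp, ?Q2R_qZ, ?Q2R_invqd, ?Q2R_opp, ?Q2R_invqd, ?RMicromega.Q2R_0.
    unfold Rdiv. ring.
Qed.
Definition mom (r : list (R * R)) (i : nat) : R :=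
  fold_right (fun nw acc => snd nw / 2 * fst nw ^ i + acc) 0 r.

Definition qmG (i : nat) : Q := if Nat.even i then (1 # Pos.of_succ_nat i)%Q else 0%Q.
Definition lobm (p : nat) : Q :=
  match p with 1%nat => 1%Q | 2%nat => (1#3)%Q | 3%nat => (13#75)%Q | _ => (29#245)%Q end.
Definition qmL (p i : nat) : Q := if Nat.eqb i (2 * p) then lobm p else qmG i.

Lemma pair_pow x i : (- x) ^ i + x ^ i = if Nat.even i then 2 * (x * x) ^ Nat.div2 i else 0.
Proof.
  destruct (Nat.Even_or_Odd i) as [[k ->]|[k ->]].
  - rewrite Nat.even_mul. simpl Nat.even. rewrite Nat.div2_double.
    rewrite !pow_mult. simpl. rewrite !Rmult_1_r. replace (- x * - x) with (x * x) by ring. ring.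
  - replace (Nat.even (2 * k + 1)) with false.
    2:{ rewrite Nat.even_add, Nat.even_mul. reflexivity. }
    rewrite !pow_add, !pow_mult. simpl. rewrite !Rmult_1_r. replace (- x * - x) with (x * x) by ring. ring.
Qed.

Lemma sqrt_sq x : 0 <= x -> sqrt x * sqrt x = x.
Proof. apply sqrt_sqrt. Qed.

Ltac finish_mom :=
  unfold qmG, qmL, lobm, Q2R; cbn -[pow IZR]; cbn [pow];
  try (rewrite ?Rmult_1_r, ?Rmult_0_l);
  lra.

Lemma momG1 i : (i <= 2)%nat -> mom (gauss 2) i = Q2R (qmG i).
Proof.
  intro Hi. unfold gauss, mom. cbn [fold_right fst snd].
  assert (Ha : / sqrt 3 * / sqrt 3 = 1/3).
  { rewrite <- Rinv_mult, sqrt_sq by lra. lra. }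
  transitivity (1/2 * ((- / sqrt 3)^i + (/ sqrt 3)^i)); [ring|].
  rewrite pair_pow, Ha.
  do 3 (destruct i as [|i]; [finish_mom|]). lia.
Qed.

Lemma momG2 i : (i <= 4)%nat -> mom (gauss 3) i = Q2R (qmG i).
Proof.
  intro Hi. unfold gauss, mom. cbn [fold_right fst snd].
  assert (Ha : sqrt (3/5) * sqrt (3/5) = 3/5) by (apply sqrt_sq; lra).
  transitivity (5/9/2 * ((- sqrt (3/5))^i + (sqrt (3/5))^i) + 8/9/2 * 0 ^ i); [ring|].
  rewrite pair_pow, Ha.
  do 5 (destruct i as [|i]; [finish_mom|]). lia.
Qed.

Lemma momG3 i : (i <= 6)%nat -> mom (gauss 4) i = Q2R (qmG i).
Proof.
  intro Hi. unfold gauss, mom. cbn [fold_right fst snd].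
  assert (Hs : sqrt (6/5) * sqrt (6/5) = 6/5) by (apply sqrt_sq; lra).
  assert (Hs0 : 0 <= sqrt (6/5)) by apply sqrt_pos.
  assert (Hs1 : sqrt (6/5) <= 3/2).
  { apply Rsqr_incr_0_var. unfold Rsqr. rewrite Hs. lra. lra. }
  assert (H30 : sqrt 30 = 5 * sqrt (6/5)).
  { replace 30 with (5*5 * (6/5)) by field. rewrite sqrt_mult by lra.
    rewrite sqrt_square by lra. reflexivity. }
  assert (Ha : sqrt (3/7 - 2/7 * sqrt (6/5)) * sqrt (3/7 - 2/7 * sqrt (6/5)) = 3/7 - 2/7 * sqrt (6/5)) by (apply sqrt_sq; lra).
  assert (Hb : sqrt (3/7 + 2/7 * sqrt (6/5)) * sqrt (3/7 + 2/7 * sqrt (6/5)) = 3/7 + 2/7 * sqrt (6/5)) by (apply sqrt_sq; lra).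
  rewrite H30.
  set (a := sqrt (3/7 - 2/7 * sqrt (6/5))) in *. set (b := sqrt (3/7 + 2/7 * sqrt (6/5))) in *.
  set (s := sqrt (6/5)) in *. clearbody a b s.
  transitivity ((18 - 5 * s) / 36 / 2 * ((- b)^i + b^i) + (18 + 5 * s) / 36 / 2 * ((- a)^i + a^i)); [ring|].
  rewrite !pair_pow, Ha, Hb.
  assert (s^2 = 6/5) by (simpl; lra).
  assert (s^3 = 6/5*s) by (simpl; nra).
  assert (s^4 = 36/25) by (simpl; nra).
  assert (s^5 = 36/25*s) by (simpl; nra).
  do 7 (destruct i as [|i]; [finish_mom|]). lia.
Qed.

Lemma momG4 i : (i <= 8)%nat -> mom (gauss 5) i = Q2R (qmG i).
Proof.
  intro Hi. unfold gauss, mom. cbn [fold_right fst snd].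
  assert (Hs : sqrt (10/7) * sqrt (10/7) = 10/7) by (apply sqrt_sq; lra).
  assert (Hs0 : 0 <= sqrt (10/7)) by apply sqrt_pos.
  assert (Hs1 : sqrt (10/7) <= 5/2).
  { apply Rsqr_incr_0_var. unfold Rsqr. rewrite Hs. lra. lra. }
  assert (H70 : sqrt 70 = 7 * sqrt (10/7)).
  { replace 70 with (7*7 * (10/7)) by field. rewrite sqrt_mult by lra.
    rewrite sqrt_square by lra. reflexivity. }
  assert (Ha : / 3 * sqrt (5 - 2 * sqrt (10/7)) * (/ 3 * sqrt (5 - 2 * sqrt (10/7))) = (5 - 2 * sqrt (10/7)) / 9).
  { transitivity (/9 * (sqrt (5 - 2 * sqrt (10/7)) * sqrt (5 - 2 * sqrt (10/7)))); [field|].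
    rewrite sqrt_sq by lra. field. }
  assert (Hb : / 3 * sqrt (5 + 2 * sqrt (10/7)) * (/ 3 * sqrt (5 + 2 * sqrt (10/7))) = (5 + 2 * sqrt (10/7)) / 9).
  { transitivity (/9 * (sqrt (5 + 2 * sqrt (10/7)) * sqrt (5 + 2 * sqrt (10/7)))); [field|].
    rewrite sqrt_sq by lra. field. }
  rewrite H70.
  set (a := / 3 * sqrt (5 - 2 * sqrt (10/7))) in *. set (b := / 3 * sqrt (5 + 2 * sqrt (10/7))) in *.
  set (s := sqrt (10/7)) in *. clearbody a b s.
  transitivity ((322 - 13 * (7 * s)) / 900 / 2 * ((- b)^i + b^i) + (322 + 13 * (7 * s)) / 900 / 2 * ((- a)^i + a^i) + 128/225/2 * 0 ^ i); [ring|].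
  rewrite !pair_pow, Ha, Hb.
  assert (s^2 = 10/7) by (simpl; lra).
  assert (s^3 = 10/7*s) by (simpl; nra).
  assert (s^4 = 100/49) by (simpl; nra).
  assert (s^5 = 100/49*s) by (simpl; nra).
  do 9 (destruct i as [|i]; [finish_mom|]). lia.
Qed.

Lemma momL1 i : (i <= 2)%nat -> mom (lobatto 2) i = Q2R (qmL 1 i).
Proof.
  intro Hi. unfold lobatto, mom. cbn [fold_right fst snd].
  replace (IZR (Zneg 1)) with (Ropp 1) by ring.
  transitivity (1/2 * ((Ropp 1)^i + 1^i)); [ring|].
  rewrite pair_pow.
  do 3 (destruct i as [|i]; [finish_mom|]). lia.
Qed.

Lemma momL2 i : (i <= 4)%nat -> mom (lobatto 3) i = Q2R (qmL 2 i).
Proof.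
  intro Hi. unfold lobatto, mom. cbn [fold_right fst snd].
  replace (IZR (Zneg 1)) with (Ropp 1) by ring.
  transitivity (1/3/2 * ((Ropp 1)^i + 1^i) + 4/3/2 * 0^i); [ring|].
  rewrite pair_pow.
  do 5 (destruct i as [|i]; [finish_mom|]). lia.
Qed.

Lemma momL3 i : (i <= 6)%nat -> mom (lobatto 4) i = Q2R (qmL 3 i).
Proof.
  intro Hi. unfold lobatto, mom. cbn [fold_right fst snd].
  replace (IZR (Zneg 1)) with (Ropp 1) by ring.
  assert (Ha : / sqrt 5 * / sqrt 5 = 1/5).
  { rewrite <- Rinv_mult, sqrt_sq by lra. lra. }
  transitivity (1/6/2 * ((Ropp 1)^i + 1^i) + 5/6/2 * ((- / sqrt 5)^i + (/ sqrt 5)^i)); [ring|].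
  rewrite !pair_pow, Ha.
  do 7 (destruct i as [|i]; [finish_mom|]). lia.
Qed.

Lemma momL4 i : (i <= 8)%nat -> mom (lobatto 5) i = Q2R (qmL 4 i).
Proof.
  intro Hi. unfold lobatto, mom. cbn [fold_right fst snd].
  replace (IZR (Zneg 1)) with (Ropp 1) by ring.
  assert (Ha : sqrt (3/7) * sqrt (3/7) = 3/7) by (apply sqrt_sq; lra).
  transitivity (1/10/2 * ((Ropp 1)^i + 1^i) + 49/90/2 * ((- sqrt (3/7))^i + (sqrt (3/7))^i) + 32/45/2 * 0^i); [ring|].
  rewrite !pair_pow, Ha.
  do 9 (destruct i as [|i]; [finish_mom|]). lia.
Qed.

Definition fsum (r : list (R * R)) (g : R * R -> R) : R :=
  fold_right (fun nw acc => g nw + acc) 0 r.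

Lemma fsum_ext r g1 g2 : (forall nw, g1 nw = g2 nw) -> fsum r g1 = fsum r g2.
Proof. intro H; induction r; simpl; [reflexivity|]. rewrite H, IHr; reflexivity. Qed.

Lemma fsum_plus r g1 g2 : fsum r (fun nw => g1 nw + g2 nw) = fsum r g1 + fsum r g2.
Proof. induction r; simpl; [ring|]. rewrite IHr; ring. Qed.

Lemma fsum_scale r c g : fsum r (fun nw => c * g nw) = c * fsum r g.
Proof. induction r; simpl; [ring|]. rewrite IHr; ring. Qed.

Lemma fsum_zero r : fsum r (fun _ => 0) = 0.
Proof. induction r; simpl; [ring|]. rewrite IHr; ring. Qed.

Fixpoint pcomp (P L : list Q) : list Q :=
  match P with [] => [] | c :: P' => padd [c] (pmul L (pcomp P' L)) end.

Lemma qeval_pcomp P L t : qeval (pcomp P L) t = qeval P (qeval L t).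
Proof.
  induction P as [|c P IH]; cbn [pcomp qeval]; [reflexivity|].
  rewrite qeval_padd, qeval_pmul, IH. cbn [qeval]. ring.
Qed.

Definition Lm (m : Z) : list Q := [(qZ m + (1#2))%Q; (1#2)%Q].

Lemma qeval_Lm m t : qeval (Lm m) t = IZR m + (1 + t) / 2.
Proof.
  unfold Lm; simpl. rewrite Q2R_plus, Q2R_qZ. unfold Q2R; simpl. field.
Qed.

Fixpoint dot (r : list (R * R)) (P : list Q) (s : nat) : R :=
  match P with [] => 0 | c :: P' => Q2R c * mom r s + dot r P' (S s) end.

Lemma fsum_dot r P s :
  fsum r (fun nw => snd nw / 2 * (qeval P (fst nw) * fst nw ^ s)) = dot r P s.
Proof.
  revert s; induction P as [|c P IH]; intro s; simpl.
  - transitivity (fsum r (fun _ => 0)); [apply fsum_ext; intro; ring | apply fsum_zero].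
  - rewrite <- IH.
    transitivity (fsum r (fun nw => Q2R c * (snd nw / 2 * fst nw ^ s) +
                                     snd nw / 2 * (qeval P (fst nw) * fst nw ^ S s))).
    + apply fsum_ext. intro nw. simpl. ring.
    + rewrite fsum_plus, fsum_scale. reflexivity.
Qed.

Lemma apply_rule_dot r m P :
  apply_rule r m (fun x => qeval P x) = dot r (pcomp P (Lm m)) 0.
Proof.
  rewrite <- fsum_dot.
  change (apply_rule r m (fun x => qeval P x)) with
    (fsum r (fun nw => snd nw / 2 * qeval P (IZR m + (1 + fst nw) / 2))).
  apply fsum_ext. intro nw. rewrite qeval_pcomp, qeval_Lm. simpl. ring.
Qed.

Fixpoint qdot (g : nat -> Q) (P : list Q) (s : nat) : Q :=
  match P with [] => 0%Q | c :: P' => Qred (c * g s + qdot g P' (S s))%Q end.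

Lemma dot_Q r g P s : (forall i, (i < s + length P)%nat -> mom r i = Q2R (g i)) ->
  dot r P s = Q2R (qdot g P s).
Proof.
  revert s; induction P as [|c P IH]; intros s H; cbn [dot qdot length].
  - now rewrite RMicromega.Q2R_0.
  - rewrite Q2R_red, Q2R_plus, Q2R_mult, H by (simpl; lia). rewrite IH; [reflexivity|].
    intros i Hi; apply H; simpl in *; lia.
Qed.

Definition qtau (p : nat) : Q :=
  match p with 1%nat => (1#2)%Q | 2%nat => (1#3)%Q | 3%nat => (-3#2)%Q | _ => (-79#5)%Q end.

Definition qblended (p : nat) (m : Z) (P : list Q) : Q :=
  (qtau p * qdot qmG (pcomp P (Lm m)) 0 + (1 - qtau p) * qdot (qmL p) (pcomp P (Lm m)) 0)%Q.

Lemma blended_Q p m P : (1 <= p <= 4)%nat -> (length (pcomp P (Lm m)) <= 2 * p + 1)%nat ->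
  blended p m (fun x => qeval P x) = Q2R (qblended p m P).
Proof.
  intros Hp Hl. unfold blended, qblended. rewrite !apply_rule_dot.
  rewrite Q2R_plus, !Q2R_mult, Q2R_minus, RMicromega.Q2R_1.
  assert (Ht : tau p = Q2R (qtau p)).
  { destruct p as [|[|[|[|[|p]]]]]; try lia; unfold tau, qtau, Q2R; simpl; field. }
  rewrite Ht.
  destruct p as [|[|[|[|[|p]]]]]; try lia;
  (erewrite (dot_Q _ qmG), (dot_Q _ (qmL _)); [reflexivity| |]);
  intros i Hi; simpl in Hi;
  first [apply momG1 | apply momG2 | apply momG3 | apply momG4 |
         apply momL1 | apply momL2 | apply momL3 | apply momL4]; lia.
Qed.

Lemma apply_rule_ext r m f g : (forall x, f x = g x) -> apply_rule r m f = apply_rule r m g.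
Proof. intro H. unfold apply_rule. induction r; simpl; [reflexivity|]. rewrite H, IHr. reflexivity. Qed.

Lemma blended_ext p m f g : (forall x, f x = g x) -> blended p m f = blended p m g.
Proof. intro H. unfold blended. rewrite (apply_rule_ext _ _ f g), (apply_rule_ext _ _ f g) by exact H. reflexivity. Qed.

Fixpoint qsum (f : nat -> Q) (N : nat) : Q :=
  match N with O => 0%Q | S N' => Qred (qsum f N' + f N')%Q end.

Lemma sumR_Q g f N : (forall i, (i < N)%nat -> g i = Q2R (f i)) -> sumR g N = Q2R (qsum f N).
Proof.
  induction N as [|N IH]; intro H; cbn [sumR qsum].
  - now rewrite RMicromega.Q2R_0.
  - rewrite Q2R_red, Q2R_plus, IH, H; [reflexivity|lia|]. intros i Hi; apply H; lia.
Qed.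

Definition em (p i : nat) : Z := (Z.of_nat i - Z.of_nat p)%Z.

Definition qAcoef (p : nat) (k : Z) : Q :=
  qsum (fun i => qblended p (em p i) (pmul (qdb p k (em p i)) (qdb p 0 (em p i)))) (3 * p + 1).
Definition qBcoef (p : nat) (k : Z) : Q :=
  qsum (fun i => qblended p (em p i) (pmul (qb p k (em p i)) (qb p 0 (em p i)))) (3 * p + 1).

Definition checkA (p : nat) (k : Z) : bool :=
  forallb (fun i => Nat.leb (length (pcomp (pmul (qdb p k (em p i)) (qdb p 0 (em p i))) (Lm (em p i)))) (2 * p + 1))
    (seq 0 (3 * p + 1)).
Definition checkB (p : nat) (k : Z) : bool :=
  forallb (fun i => Nat.leb (length (pcomp (pmul (qb p k (em p i)) (qb p 0 (em p i))) (Lm (em p i)))) (2 * p + 1))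
    (seq 0 (3 * p + 1)).

Lemma Acoef_Q p k : (1 <= p <= 4)%nat -> checkA p k = true -> Acoef p k = Q2R (qAcoef p k).
Proof.
  intros Hp Hc. unfold Acoef, sum_elems, qAcoef. apply sumR_Q. intros i Hi.
  unfold checkA in Hc. rewrite forallb_forall in Hc.
  specialize (Hc i (proj2 (in_seq _ _ _) (conj (Nat.le_0_l _) Hi))).
  apply Nat.leb_le in Hc. fold (em p i).
  rewrite <- blended_Q by assumption. apply blended_ext. intro x.
  rewrite qeval_pmul, !dbpiece_q. reflexivity.
Qed.

Lemma Bcoef_Q p k : (1 <= p <= 4)%nat -> checkB p k = true -> Bcoef p k = Q2R (qBcoef p k).
Proof.
  intros Hp Hc. unfold Bcoef, sum_elems, qBcoef. apply sumR_Q. intros i Hi.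
  unfold checkB in Hc. rewrite forallb_forall in Hc.
  specialize (Hc i (proj2 (in_seq _ _ _) (conj (Nat.le_0_l _) Hi))).
  apply Nat.leb_le in Hc. fold (em p i).
  rewrite <- blended_Q by assumption. apply blended_ext. intro x.
  rewrite qeval_pmul, !bpiece_q. reflexivity.
Qed.


Lemma sumR_ext f g N : (forall i, (i < N)%nat -> f i = g i) -> sumR f N = sumR g N.
Proof. induction N; intro H; simpl; [reflexivity|]. rewrite IHN; [rewrite H by lia; reflexivity|]. intros; apply H; lia. Qed.

Lemma sumR_plus f g N : sumR (fun i => f i + g i) N = sumR f N + sumR g N.
Proof. induction N; simpl; [ring|]. rewrite IHN; ring. Qed.

Lemma sumR_minus f g N : sumR (fun i => f i - g i) N = sumR f N - sumR g N.
Proof. induction N; simpl; [ring|]. rewrite IHN; ring. Qed.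

Lemma sumR_scal c f N : sumR (fun i => c * f i) N = c * sumR f N.
Proof. induction N; simpl; [ring|]. rewrite IHN; ring. Qed.

Lemma sumR_swap (f : nat -> nat -> R) M N :
  sumR (fun i => sumR (fun m => f i m) M) N = sumR (fun m => sumR (fun i => f i m) N) M.
Proof.
  induction N; simpl.
  - induction M; simpl; [reflexivity|]. rewrite <- IHM; ring.
  - rewrite IHN, <- sumR_plus. reflexivity.
Qed.

Lemma sumR_abs f N : Rabs (sumR f N) <= sumR (fun i => Rabs (f i)) N.
Proof.
  induction N; simpl.
  - rewrite Rabs_R0; lra.
  - eapply Rle_trans; [apply Rabs_triang|]. lra.
Qed.

Lemma sumR_le f g N : (forall i, (i < N)%nat -> f i <= g i) -> sumR f N <= sumR g N.
Proof. induction N; intro H; simpl; [lra|]. apply Rplus_le_compat; [apply IHN; intros; apply H; lia| apply H; lia]. Qed.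

Lemma sumR_first f N : sumR f (S N) = f O + sumR (fun i => f (S i)) N.
Proof. induction N; simpl in *; [ring|]. rewrite IHN; ring. Qed.

Lemma sum_f_R0_sumR f n : sum_f_R0 f n = sumR f (S n).
Proof. induction n; simpl in *; [ring|]. rewrite IHn; ring. Qed.

Lemma pow_even_nonneg y k : 0 <= y ^ (2 * k).
Proof. rewrite pow_mult. apply pow_le. nra. Qed.

Lemma fact_ge1 n : 1 <= INR (fact n).
Proof. apply (le_INR 1). apply lt_O_fact. Qed.

Lemma Rdiv_le_0_compat a b : 0 <= a -> 0 < b -> 0 <= a / b.
Proof. intros. unfold Rdiv. apply Rmult_le_pos; [lra|]. left; apply Rinv_0_lt_compat; lra. Qed.

Lemma cos_term_abs y k : Rabs (cos_term y k) <= y ^ (2 * k).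
Proof.
  unfold cos_term. rewrite Rabs_mult, pow_1_abs, Rmult_1_l.
  pose proof (fact_ge1 (2 * k)). pose proof (pow_even_nonneg y k).
  rewrite Rabs_right.
  - unfold Rdiv. rewrite <- (Rmult_1_r (y ^ (2 * k))) at 2. apply Rmult_le_compat_l; [lra|].
    rewrite <- Rinv_1. apply Rinv_le_contravar; lra.
  - apply Rle_ge. apply Rdiv_le_0_compat; lra.
Qed.

Lemma abs_between e a : (a <= e <= 0) \/ (0 <= e <= a) -> Rabs e <= Rabs a.
Proof. intros [[H1 H2]|[H1 H2]]; unfold Rabs; repeat destruct Rcase_abs; lra. Qed.

Lemma cos_err y n : Rabs y <= 1 -> Rabs (cos y - sumR (cos_term y) (S n)) <= y ^ (2 * S n).
Proof.
  intro Hy. eapply Rle_trans; [|apply cos_term_abs].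
  assert (HP := PI2_1).
  assert (Hy1 : - PI / 2 <= y) by (pose proof (Rle_abs y); pose proof (Rle_abs (- y)); rewrite Rabs_Ropp in *; lra).
  assert (Hy2 : y <= PI / 2) by (pose proof (Rle_abs y); pose proof (Rle_abs (- y)); rewrite Rabs_Ropp in *; lra).
  rewrite <- sum_f_R0_sumR. apply abs_between.
  assert (Hs : forall k, 0 <= (-1) ^ k * cos_term y k).
  { intro k. unfold cos_term. rewrite <- Rmult_assoc, <- pow_add.
    replace (k + k)%nat with (2 * k)%nat by lia. rewrite pow_mult. replace ((-1)^2) with 1 by ring.
    rewrite pow1, Rmult_1_l. apply Rdiv_le_0_compat; [apply pow_even_nonneg|].
    pose proof (fact_ge1 (2 * k)); lra. }
  destruct (Nat.Even_or_Odd n) as [[k Hk]|[k Hk]].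
  - destruct k as [|k].
    + subst n. pose proof (cos_bound y 0 Hy1 Hy2) as [H1 H2].
      unfold cos_approx in H1. simpl (2*0+1)%nat in H1. rewrite tech5 in H1.
      pose proof (COS_bound y).
      assert (H0 : sum_f_R0 (cos_term y) 0 = 1) by (simpl; unfold cos_term; simpl; field).
      specialize (Hs 1%nat). simpl pow in Hs. rewrite H0 in *. simpl (2 * 0)%nat. rewrite H0. left; lra.
    + pose proof (cos_bound y (S k) Hy1 Hy2) as [H1 _].
      pose proof (cos_bound y k Hy1 Hy2) as [_ H2].
      unfold cos_approx in *.
      replace (2 * S k + 1)%nat with (S n) in H1 by lia.
      replace (2 * (k + 1))%nat with n in H2 by lia.
      rewrite tech5 in H1. specialize (Hs (S n)).
      replace ((-1) ^ S n) with (-1) in Hs.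
      2:{ subst n. replace (S (2 * S k)) with (2 * S k + 1)%nat by lia. rewrite pow_add, pow_mult. replace ((-1)^2) with 1 by ring. rewrite pow1. ring. }
      left; lra.
  - pose proof (cos_bound y k Hy1 Hy2) as [H1 H2].
    unfold cos_approx in *.
    replace (2 * k + 1)%nat with n in H1 by lia.
    replace (2 * (k + 1))%nat with (S n) in H2 by lia.
    rewrite tech5 in H2. specialize (Hs (S n)).
    replace ((-1) ^ S n) with 1 in Hs.
    2:{ subst n. replace (S (2 * k + 1)) with (2 * S k)%nat by lia. rewrite pow_mult. replace ((-1)^2) with 1 by ring. rewrite pow1. ring. }
    right; lra.
Qed.

Definition calX (c : nat -> R) (p : nat) (L : R) : R :=
  c 0%nat + 2 * sumR (fun i => c (S i) * cos (INR (S i) * L)) p.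
Definition coefT (c : nat -> R) (p m : nat) : R :=
  (if Nat.eqb m 0 then c 0%nat else 0)
  + (-1) ^ m / INR (fact (2 * m)) * (2 * sumR (fun i => c (S i) * INR (S i) ^ (2 * m)) p).
Definition polyT (c : nat -> R) (p N : nat) (L : R) : R :=
  sumR (fun m => coefT c p m * L ^ (2 * m)) N.

Lemma sumR_zero N : sumR (fun _ => 0) N = 0.
Proof. induction N; simpl; [ring|]. rewrite IHN; ring. Qed.

Lemma polyT_eq c p N L :
  polyT c p (S N) L = c 0%nat + 2 * sumR (fun i => c (S i) * sumR (cos_term (INR (S i) * L)) (S N)) p.
Proof.
  unfold polyT, coefT.
  rewrite (sumR_ext _ (fun m => (if Nat.eqb m 0 then c 0%nat else 0) * L ^ (2 * m)
      + 2 * sumR (fun i => c (S i) * cos_term (INR (S i) * L) m) p)).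
  - rewrite sumR_plus, sumR_first. simpl Nat.eqb.
    rewrite (sumR_ext (fun i => (if Nat.eqb (S i) 0 then c 0%nat else 0) * L ^ (2 * S i)) (fun _ => 0))
      by (intros; simpl; ring).
    rewrite sumR_zero, sumR_scal, sumR_swap.
    f_equal; [simpl; ring|]. f_equal. apply sumR_ext. intros i _. rewrite sumR_scal. reflexivity.
  - intros m _.
    assert (H : sumR (fun i => c (S i) * cos_term (INR (S i) * L) m) p =
                ((-1) ^ m / INR (fact (2 * m)) * L ^ (2 * m)) * sumR (fun i => c (S i) * INR (S i) ^ (2 * m)) p).
    { rewrite <- sumR_scal. apply sumR_ext. intros i _. unfold cos_term. rewrite Rpow_mult_distr.
      field. apply INR_fact_neq_0. }
    rewrite H. ring.
Qed.

Lemma calX_err c p N L : 0 <= L -> INR p * L <= 1 ->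
  Rabs (calX c p L - polyT c p (S N) L)
  <= (2 * sumR (fun i => Rabs (c (S i)) * INR (S i) ^ (2 * S N)) p) * L ^ (2 * S N).
Proof.
  intros HL HpL. rewrite polyT_eq. unfold calX.
  replace (c 0%nat + 2 * sumR (fun i => c (S i) * cos (INR (S i) * L)) p -
    (c 0%nat + 2 * sumR (fun i => c (S i) * sumR (cos_term (INR (S i) * L)) (S N)) p))
   with (2 * sumR (fun i => c (S i) * (cos (INR (S i) * L) - sumR (cos_term (INR (S i) * L)) (S N))) p).
  2:{ rewrite (sumR_ext _ (fun i => c (S i) * cos (INR (S i) * L) - c (S i) * sumR (cos_term (INR (S i) * L)) (S N)))
        by (intros; ring).
      rewrite sumR_minus. ring. }
  rewrite Rabs_mult, Rabs_right by lra.
  rewrite Rmult_assoc. apply Rmult_le_compat_l; [lra|].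
  rewrite <- (Rmult_comm (L ^ (2 * S N))), <- sumR_scal.
  eapply Rle_trans; [apply sumR_abs|]. apply sumR_le. intros i Hi.
  rewrite Rabs_mult.
  assert (Hk : 0 <= INR (S i) * L <= 1).
  { split. apply Rmult_le_pos; [apply pos_INR|lra].
    eapply Rle_trans; [|exact HpL]. apply Rmult_le_compat_r; [lra|]. apply le_INR; lia. }
  eapply Rle_trans.
  { apply Rmult_le_compat_l; [apply Rabs_pos|]. apply cos_err. rewrite Rabs_right; lra. }
  rewrite Rpow_mult_distr. right; ring.
Qed.

Definition bprev (b : nat -> R) (m : nat) : R := match m with O => 0 | S m' => b m' end.

Lemma telescope a b N L :
  sumR (fun m => a m * L ^ (2 * m)) N - L ^ 2 * sumR (fun m => b m * L ^ (2 * m)) N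
  = sumR (fun m => (a m - bprev b m) * L ^ (2 * m)) N - bprev b N * L ^ (2 * N).
Proof.
  induction N; cbn [sumR].
  - simpl. ring.
  - replace (2 * S N)%nat with (2 + 2 * N)%nat by lia. rewrite pow_add.
    cbn [bprev]. 
    replace (sumR (fun m => a m * L ^ (2 * m)) N + a N * L ^ (2 * N) -
      L ^ 2 * (sumR (fun m => b m * L ^ (2 * m)) N + b N * L ^ (2 * N)))
    with ((sumR (fun m => a m * L ^ (2 * m)) N - L ^ 2 * sumR (fun m => b m * L ^ (2 * m)) N)
          + a N * L ^ (2 * N) - L^2 * b N * L ^ (2 * N)) by ring.
    rewrite IHN. ring.
Qed.

Lemma abs4 a b c d : Rabs (a - b - c - d) <= Rabs a + Rabs b + Rabs c + Rabs d.
Proof.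
  unfold Rminus. eapply Rle_trans; [apply Rabs_triang|]. rewrite Rabs_Ropp.
  eapply Rle_trans; [apply Rplus_le_compat_r, Rabs_triang|]. rewrite Rabs_Ropp.
  eapply Rle_trans; [apply Rplus_le_compat_r, Rplus_le_compat_r, Rabs_triang|]. rewrite Rabs_Ropp. lra.
Qed.

Lemma numer_bound p (al be : nat -> R) (C : R) :
  (forall m, (m < p + 2)%nat -> coefT al p m = bprev (coefT be p) m) ->
  coefT al p (p + 2) - coefT be p (p + 1) = C ->
  coefT be p 0 = 1 ->
  exists K2 K1, 0 <= K1 /\ forall L, 0 <= L -> INR p * L <= 1 -> L <= 1 ->
    Rabs (calX al p L - L ^ 2 * calX be p L - C * L ^ (2 * p + 4) * calX be p L) <= K2 * L ^ (2 * p + 6)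
    /\ Rabs (calX be p L - 1) <= K1 * L ^ 2.
Proof.
  intros H1 H2 H3.
  set (KA := 2 * sumR (fun i => Rabs (al (S i)) * INR (S i) ^ (2 * S (p + 2))) p).
  set (KB := 2 * sumR (fun i => Rabs (be (S i)) * INR (S i) ^ (2 * S (p + 2))) p).
  set (K1 := 2 * sumR (fun i => Rabs (be (S i)) * INR (S i) ^ (2 * S 0)) p).
  assert (HK1 : 0 <= K1).
  { unfold K1. apply Rmult_le_pos; [lra|]. rewrite <- (sumR_zero p). apply sumR_le. intros.
    apply Rmult_le_pos; [apply Rabs_pos| apply pow_le, pos_INR]. }
  assert (HKA : 0 <= KA).
  { unfold KA. apply Rmult_le_pos; [lra|]. rewrite <- (sumR_zero p). apply sumR_le. intros.
    apply Rmult_le_pos; [apply Rabs_pos| apply pow_le, pos_INR]. }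
  assert (HKB : 0 <= KB).
  { unfold KB. apply Rmult_le_pos; [lra|]. rewrite <- (sumR_zero p). apply sumR_le. intros.
    apply Rmult_le_pos; [apply Rabs_pos| apply pow_le, pos_INR]. }
  exists (KA + KB + Rabs (coefT be p (p + 2)) + Rabs C * K1), K1. split; [exact HK1|].
  intros L HL HpL HL1.
  assert (EB1 : Rabs (calX be p L - 1) <= K1 * L ^ 2).
  { pose proof (calX_err be p 0 L HL HpL) as E. unfold polyT in E. cbn [sumR] in E.
    rewrite H3 in E. replace (0 + 1 * L ^ (2 * 0)) with 1 in E by (simpl; ring).
    exact E. }
  split; [|exact EB1].
  pose proof (calX_err al p (p + 2) L HL HpL) as EA.
  pose proof (calX_err be p (p + 2) L HL HpL) as EB.
  fold KA in EA. fold KB in EB.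
  pose proof (telescope (coefT al p) (coefT be p) (S (p + 2)) L) as T.
  fold (polyT al p (S (p + 2)) L) (polyT be p (S (p + 2)) L) in T.
  assert (Hs : sumR (fun m => (coefT al p m - bprev (coefT be p) m) * L ^ (2 * m)) (S (p + 2))
               = C * L ^ (2 * p + 4)).
  { cbn [sumR]. rewrite (sumR_ext _ (fun _ => 0)).
    - rewrite sumR_zero. cbn [bprev]. replace (p + 2)%nat with (S (p + 1)) at 2 by lia.
      cbn [bprev]. rewrite H2. replace (2 * (p + 2))%nat with (2 * p + 4)%nat by lia. ring.
    - intros m Hm. rewrite H1 by lia. ring. }
  rewrite Hs in T. cbn [bprev] in T.
  set (X := L ^ (2 * p + 4)) in *.
  assert (HX : 0 <= X) by (apply pow_le; lra).
  assert (E6 : L ^ (2 * S (p + 2)) = X * L ^ 2).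
  { unfold X. rewrite <- pow_add. f_equal. lia. }
  assert (E6' : L ^ (2 * p + 6) = X * L ^ 2).
  { unfold X. rewrite <- pow_add. f_equal. lia. }
  rewrite E6 in EA, EB, T. rewrite E6'.
  set (A := calX al p L) in *. set (B := calX be p L) in *.
  set (PA := polyT al p (S (p + 2)) L) in *. set (PB := polyT be p (S (p + 2)) L) in *.
  set (cb := coefT be p (p + 2)) in *.
  replace (A - L ^ 2 * B - C * X * B) with
    ((A - PA) - L ^ 2 * (B - PB) - cb * (X * L ^ 2) - C * X * (B - 1))
    by lra.
  eapply Rle_trans; [apply abs4|].
  assert (HL2 : 0 <= L ^ 2 <= 1) by (split; [apply pow_le; lra| simpl; nra]).
  rewrite !Rabs_mult. rewrite (Rabs_right (L ^ 2)) by lra. rewrite (Rabs_right X) by lra.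
  try rewrite (Rabs_right (L ^ 2)) by lra.
  assert (Hb1 : Rabs (B - PB) * L ^ 2 <= KB * (X * L ^ 2)).
  { eapply Rle_trans. apply Rmult_le_compat_r; [lra| exact EB].
    assert (0 <= KB * (X * L ^ 2)) by (apply Rmult_le_pos; [lra| apply Rmult_le_pos; lra]).
    nra. }
  assert (Hc : Rabs C * X * Rabs (B - 1) <= Rabs C * K1 * (X * L ^ 2)).
  { replace (Rabs C * K1 * (X * L ^ 2)) with (Rabs C * X * (K1 * L ^ 2)) by ring.
    apply Rmult_le_compat_l; [apply Rmult_le_pos; [apply Rabs_pos|lra]| exact EB1]. }
  nra.
Qed.

Lemma final_generic (n : nat) (a : nat -> R) (p : nat) (omega : R) (CA CB : R -> R) (C : R) :
  0 < omega -> (p <= 4)%nat ->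
  (exists K2 K1, 0 <= K1 /\ forall L, 0 <= L -> INR p * L <= 1 -> L <= 1 ->
    Rabs (CA L - L ^ 2 * CB L - C * L ^ (2 * p + 4) * CB L) <= K2 * L ^ (2 * p + 6)
    /\ Rabs (CB L - 1) <= K1 * L ^ 2) ->
  exists K delta : R, 0 < delta /\
    forall h lam : R, 0 < h < delta ->
      sumR (fun i => a (S i) * omega ^ (2 * i)) n * CA (omega * h)
        = (lam - a O) * CB (omega * h) * h ^ 2 ->
      Rabs (lam - sumR (fun k => a k * omega ^ (2 * k)) (S n)
              - C * sumR (fun i => a (S i) * omega ^ (2 * S i)) n
                * (omega * h) ^ (2 * p + 2))
        <= K * h ^ (2 * p + 4).
Proof.
  intros Hom Hp [K2 [K1 [HK1 HN]]].
  set (S1 := sumR (fun i => a (S i) * omega ^ (2 * i)) n).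
  assert (HS2 : sumR (fun i => a (S i) * omega ^ (2 * S i)) n = omega ^ 2 * S1).
  { unfold S1. rewrite <- sumR_scal. apply sumR_ext. intros i _.
    replace (2 * S i)%nat with (2 + 2 * i)%nat by lia. rewrite pow_add. ring. }
  assert (HS : sumR (fun k => a k * omega ^ (2 * k)) (S n) = a O + omega ^ 2 * S1).
  { rewrite sumR_first, HS2. simpl (2 * 0)%nat. rewrite pow_O. ring. }
  set (Lmax := Rmin (1/4) (1 / (2 * K1 + 2))).
  assert (HLm : 0 < Lmax).
  { unfold Lmax. apply Rmin_glb_lt; [lra|]. apply Rdiv_lt_0_compat; lra. }
  exists (2 * Rabs S1 * K2 * omega ^ (2 * p + 6)), (Lmax / omega). split.
  { apply Rdiv_lt_0_compat; lra. }
  intros h lam [Hh Hhd] Hyp.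
  rewrite HS, HS2.
  set (L := omega * h).
  assert (HL0 : 0 < L) by (unfold L; nra).
  assert (HLl : L < Lmax).
  { unfold L. apply (Rmult_lt_compat_l omega) in Hhd; [|lra].
    replace (omega * (Lmax / omega)) with Lmax in Hhd by (field; lra). lra. }
  assert (HLl' : L < Rmin (1/4) (1 / (2 * K1 + 2))) by exact HLl.
  assert (HL4 : L <= 1/4) by (pose proof (Rmin_l (1/4) (1 / (2 * K1 + 2))); lra).
  assert (HLK : L <= 1 / (2 * K1 + 2)) by (pose proof (Rmin_r (1/4) (1 / (2 * K1 + 2))); lra).
  assert (HpL : INR p * L <= 1).
  { assert (INR p <= 4) by (replace 4 with (INR 4) by (simpl; ring); apply le_INR; lia).
    pose proof (pos_INR p). nra. }
  destruct (HN L (Rlt_le _ _ HL0) HpL ltac:(lra)) as [N1 N2].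
  fold L in Hyp.
  set (A := CA L) in *. set (B := CB L) in *.
  assert (HB : 1/2 <= B).
  { assert (K1 * L ^ 2 <= 1/2).
    { assert (K1 * L <= 1/2).
      { apply (Rmult_le_compat_l K1) in HLK; [|lra].
        replace (K1 * (1 / (2 * K1 + 2))) with (K1 / (2 * K1 + 2)) in HLK by (field; lra).
        assert (K1 / (2 * K1 + 2) <= 1/2).
        { apply (Rmult_le_reg_r (2 * K1 + 2)); [lra|]. unfold Rdiv. rewrite Rmult_assoc, Rinv_l by lra. lra. }
        lra. }
      simpl. nra. }
    pose proof (Rle_abs (1 - B)). rewrite Rabs_minus_sym in N2. lra. }
  set (E := lam - (a O + omega ^ 2 * S1) - C * (omega ^ 2 * S1) * L ^ (2 * p + 2)).
  set (Num := A - L ^ 2 * B - C * L ^ (2 * p + 4) * B).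
  assert (Key : E * (B * h ^ 2) = S1 * Num).
  { assert (HL2 : L ^ 2 = omega ^ 2 * h ^ 2) by (unfold L; ring).
    assert (HL4' : L ^ (2 * p + 4) = L ^ (2 * p + 2) * L ^ 2).
    { rewrite <- pow_add. f_equal. lia. }
    unfold E, Num. rewrite HL4', HL2.
    transitivity ((lam - a O) * B * h ^ 2 - S1 * A + S1 * (A - omega ^ 2 * h ^ 2 * B - C * (L ^ (2 * p + 2) * (omega ^ 2 * h ^ 2)) * B)); [ring|].
    rewrite <- Hyp. ring. }
  assert (Hh2 : 0 < h ^ 2) by (apply pow_lt; lra).
  assert (HL6 : L ^ (2 * p + 6) = omega ^ (2 * p + 6) * h ^ (2 * p + 4) * h ^ 2).
  { unfold L. rewrite Rpow_mult_distr, Rmult_assoc, <- pow_add. f_equal. f_equal. lia. }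
  assert (HE : Rabs E * (B * h ^ 2) <= Rabs S1 * (K2 * L ^ (2 * p + 6))).
  { replace (Rabs E * (B * h ^ 2)) with (Rabs (E * (B * h ^ 2))).
    2:{ rewrite Rabs_mult, (Rabs_right (B * h ^ 2)); [reflexivity|]. apply Rle_ge, Rmult_le_pos; lra. }
    rewrite Key, Rabs_mult. apply Rmult_le_compat_l; [apply Rabs_pos|exact N1]. }
  rewrite HL6 in HE.
  apply (Rmult_le_reg_r (h ^ 2)); [exact Hh2|].
  pose proof (Rabs_pos E).
  assert (0 <= Rabs E * h ^ 2) by (apply Rmult_le_pos; lra).
  assert (Rabs E * h ^ 2 <= 2 * (Rabs E * (B * h ^ 2))) by nra.
  lra.
Qed.

Fixpoint qpow (q : Q) (n : nat) : Q := match n with O => 1%Q | S n' => (q * qpow q n')%Q end.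

Lemma Q2R_qpow q n : Q2R (qpow q n) = Q2R q ^ n.
Proof. induction n; simpl; [apply RMicromega.Q2R_1|]. rewrite Q2R_mult, IHn; reflexivity. Qed.

Fixpoint zfact (n : nat) : Z := match n with O => 1%Z | S n' => (Z.of_nat (S n') * zfact n')%Z end.

Lemma zfact_pos n : (0 < zfact n)%Z.
Proof. induction n; cbn [zfact]; [lia|]. apply Z.mul_pos_pos; lia. Qed.

Lemma INR_fact_Z n : INR (fact n) = IZR (zfact n).
Proof.
  induction n; [reflexivity|]. change (fact (S n)) with (S n * fact n)%nat.
  cbn [zfact]. rewrite mult_INR, mult_IZR, IHn, INR_IZR_INZ. reflexivity.
Qed.

Definition qnat (k : nat) : Q := qZ (Z.of_nat k).
Lemma Q2R_qnat k : Q2R (qnat k) = INR k.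
Proof. unfold qnat. rewrite Q2R_qZ, INR_IZR_INZ. reflexivity. Qed.

Lemma Q2R_invfact n : Q2R (/ qZ (zfact n)) = / INR (fact n).
Proof.
  rewrite Q2R_inv, Q2R_qZ, INR_fact_Z; [reflexivity|].
  unfold qZ, Qeq; simpl. pose proof (zfact_pos n). lia.
Qed.

Lemma Q2R_m1 : Q2R (-1 # 1) = -1.
Proof. unfold Q2R; simpl. field. Qed.
Lemma Q2R_2 : Q2R (2 # 1) = 2.
Proof. unfold Q2R; simpl. field. Qed.

Definition qcoefT (qa : nat -> Q) (p m : nat) : Q :=
  Qred ((if Nat.eqb m 0 then qa 0%nat else 0%Q)
   + qpow (-1 # 1) m * / qZ (zfact (2 * m)) * ((2 # 1) * qsum (fun i => qa (S i) * qpow (qnat (S i)) (2 * m)) p))%Q.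

Lemma coefT_Q al qa p m : (forall k, (k <= p)%nat -> al k = Q2R (qa k)) ->
  coefT al p m = Q2R (qcoefT qa p m).
Proof.
  intro H. unfold coefT, qcoefT. rewrite Q2R_red, Q2R_plus, !Q2R_mult, Q2R_qpow, Q2R_m1, Q2R_invfact, Q2R_2.
  rewrite (sumR_Q _ (fun i => qa (S i) * qpow (qnat (S i)) (2 * m))%Q).
  - f_equal. destruct (Nat.eqb m 0); [apply H; lia| symmetry; apply RMicromega.Q2R_0].
  - intros i Hi. rewrite Q2R_mult, Q2R_qpow, Q2R_qnat, H by lia. ring.
Qed.

Definition qbprev (b : nat -> Q) (m : nat) : Q := match m with O => 0%Q | S m' => b m' end.

Definition qCconst (qa qb : nat -> Q) (p : nat) : Q :=
  ((2 # 1) * qpow (-1 # 1) p *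
   qsum (fun i => qpow (qnat (S i)) (2 * p + 4) * / qZ (zfact (2 * p + 4)) * qa (S i)
                + qpow (qnat (S i)) (2 * p + 2) * / qZ (zfact (2 * p + 2)) * qb (S i)) p)%Q.

Definition qal p k := qAcoef p (Z.of_nat k).
Definition qbe p k := qBcoef p (Z.of_nat k).

Lemma Cconst_Q p : (1 <= p <= 4)%nat -> forallb (fun k => checkA p (Z.of_nat k) && checkB p (Z.of_nat k)) (seq 0 (S p)) = true ->
  Cconst p = Q2R (qCconst (qal p) (qbe p) p).
Proof.
  intros Hp Hc. rewrite forallb_forall in Hc.
  unfold Cconst, qCconst. rewrite !Q2R_mult, Q2R_qpow, Q2R_m1, Q2R_2. f_equal.
  apply sumR_Q. intros i Hi.
  destruct (andb_prop _ _ (Hc (S i) ltac:(apply in_seq; lia))) as [HA HB].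
  rewrite Q2R_plus, !Q2R_mult, !Q2R_qpow, !Q2R_qnat, !Q2R_invfact.
  unfold qal, qbe. rewrite <- Acoef_Q, <- Bcoef_Q by assumption. unfold Rdiv. ring.
Qed.

Definition checkall (p : nat) : bool :=
  forallb (fun k => checkA p (Z.of_nat k) && checkB p (Z.of_nat k)) (seq 0 (S p))
  && forallb (fun m => Qeq_bool (qcoefT (qal p) p m) (qbprev (qcoefT (qbe p) p) m)) (seq 0 (p + 2))
  && Qeq_bool (qcoefT (qal p) p (p + 2) - qcoefT (qbe p) p (p + 1))%Q (qCconst (qal p) (qbe p) p)
  && Qeq_bool (qcoefT (qbe p) p 0) 1%Q.

Lemma checkall_ok p : (1 <= p <= 4)%nat -> checkall p = true ->
  let al := fun k => Acoef p (Z.of_nat k) in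
  let be := fun k => Bcoef p (Z.of_nat k) in
  (forall m, (m < p + 2)%nat -> coefT al p m = bprev (coefT be p) m) /\
  coefT al p (p + 2) - coefT be p (p + 1) = Cconst p /\
  coefT be p 0 = 1.
Proof.
  intros Hp Hc al be. unfold checkall in Hc.
  apply andb_prop in Hc as [Hc H4]. apply andb_prop in Hc as [Hc H3].
  apply andb_prop in Hc as [H1 H2].
  assert (Ha : forall k, (k <= p)%nat -> al k = Q2R (qal p k)).
  { intros k Hk. rewrite forallb_forall in H1.
    destruct (andb_prop _ _ (H1 k ltac:(apply in_seq; lia))). apply Acoef_Q; assumption. }
  assert (Hb : forall k, (k <= p)%nat -> be k = Q2R (qbe p k)).
  { intros k Hk. rewrite forallb_forall in H1.
    destruct (andb_prop _ _ (H1 k ltac:(apply in_seq; lia))). apply Bcoef_Q; assumption. }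
  split; [|split].
  - intros m Hm. rewrite forallb_forall in H2. specialize (H2 m ltac:(apply in_seq; lia)).
    apply RMicromega.Qeq_true in H2. rewrite (coefT_Q al (qal p)) by assumption.
    rewrite H2. destruct m; simpl; [apply RMicromega.Q2R_0|]. symmetry; apply coefT_Q; assumption.
  - apply RMicromega.Qeq_true in H3. rewrite Q2R_minus in H3.
    rewrite (coefT_Q al (qal p)), (coefT_Q be (qbe p)), H3 by assumption.
    symmetry; apply Cconst_Q; [assumption|]. exact H1.
  - apply RMicromega.Qeq_true in H4. rewrite RMicromega.Q2R_1 in H4.
    rewrite (coefT_Q be (qbe p)) by assumption. exact H4.
Qed.

Lemma check1 : checkall 1 = true. Proof. vm_compute. reflexivity. Qed.
Lemma check2 : checkall 2 = true. Proof. vm_compute. reflexivity. Qed.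
Lemma check3 : checkall 3 = true. Proof. vm_compute. reflexivity. Qed.
Lemma check4 : checkall 4 = true. Proof. vm_compute. reflexivity. Qed.

Theorem mainTheorem2 (n : nat) (a : nat -> R) (p : nat) (omega : R) :
  (1 <= n)%nat -> (1 <= p <= 4)%nat -> 0 < omega ->
  exists K delta : R, 0 < delta /\
    forall h lam : R, 0 < h < delta ->
      sumR (fun i => a (S i) * omega ^ (2 * i)) n * calA p (omega * h)
        = (lam - a O) * calB p (omega * h) * h ^ 2 ->
      Rabs (lam - sumR (fun k => a k * omega ^ (2 * k)) (S n)
              - Cconst p * sumR (fun i => a (S i) * omega ^ (2 * S i)) n
                * (omega * h) ^ (2 * p + 2))
        <= K * h ^ (2 * p + 4).
Proof.
  intros Hn Hp Hom.
  assert (Hc : checkall p = true).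
  { destruct p as [|[|[|[|[|p']]]]]; try lia;
    [exact check1|exact check2|exact check3|exact check4]. }
  destruct (checkall_ok p Hp Hc) as [H1 [H2 H3]].
  apply (final_generic n a p omega (calA p) (calB p) (Cconst p) Hom ltac:(lia)).
  destruct (numer_bound p _ _ (Cconst p) H1 H2 H3) as [K2 [K1 [HK HN]]].
  exists K2, K1. split; [exact HK|]. exact HN.
Qed.
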